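(* Let $(S_n)_{n\ge0}$ be defined by $S_0=3$, $S_1=1$, $S_2=3$ and $S_{n+1}=S_n+S_{n-1}+S_{n-2}$ for $n\ge 2$. Let $\alpha,\beta,\gamma$ be the roots of $x^3-x^2-x-1=0$ and $C_n=\alpha^n\beta^n+\alpha^n\gamma^n+\beta^n\gamma^n$ for $n\ge0$. Then for all $n\ge 0$, $$S_n^4=S_{4n}+2C_{2n}+4C_n^2+4S_{2n}C_n=S_{4n}-4S_n+4S_{2n}C_n+6C_n^2.$$
   Context: $S_n$ is the generalized Lucas (generalized Tribonacci) sequence. *)

(* Defs.v *)
From HB Require Import structures.
From mathcomp Require Import all_boot all_order all_algebra all_field.
Set Implicit Arguments. Unset Strict Implicit. Unset Printing Implicit Defensive.
Import Order.TTheory GRing.Theory Num.Theory.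
Local Open Scope ring_scope.

Fixpoint S (n : nat) : int :=
  match n with
  | 0%N => 3
  | 1%N => 1
  | 2%N => 3
  | ((m.+1 as q).+1 as p).+1 => S p + S q + S m
  end.

Definition C (a b c : algC) (n : nat) : algC :=
  a ^+ n * b ^+ n + a ^+ n * c ^+ n + b ^+ n * c ^+ n.

(* Main.v *)
Require Import Defs.
From HB Require Import structures.
From mathcomp Require Import all_boot all_order all_algebra all_field.
From mathcomp Require Import ring.
Import Order.TTheory GRing.Theory Num.Theory.
Local Open Scope ring_scope.

Lemma evalH {alpha beta gamma : algC}
  (hroots : ('X^3 - 'X^2 - 'X - 1 : {poly algC})
            = ('X - alpha%:P) * ('X - beta%:P) * ('X - gamma%:P)) (t : algC) :
  t ^+ 3 - t ^+ 2 - t - 1 = (t - alpha) * (t - beta) * (t - gamma).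
Proof.
have := congr1 (fun p => p.[t]) hroots => /=.
by rewrite !hornerE.
Qed.

Lemma S_eq {alpha beta gamma : algC}
  (hroots : ('X^3 - 'X^2 - 'X - 1 : {poly algC})
            = ('X - alpha%:P) * ('X - beta%:P) * ('X - gamma%:P)) (n : nat) :
  (S n)%:~R = alpha ^+ n + beta ^+ n + gamma ^+ n :> algC.
Proof.
have h0 := evalH hroots 0.
have h1 := evalH hroots 1.
have hm := evalH hroots (-1).
have ra : forall t, t = alpha \/ t = beta \/ t = gamma -> t ^+ 3 = t ^+ 2 + t + 1.
  move=> t ht; apply/eqP; rewrite -subr_eq0.
  have -> : t^+3 - (t^+2+t+1) = t^+3 - t^+2 - t - 1 by ring.
  rewrite (evalH hroots); case: ht => [->|[->|->]]; by rewrite !subrr ?mulr0 ?mul0r.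
have P1 : (1 - alpha) * (1 - beta) * (1 - gamma) = -2 by rewrite -h1; ring.
have Pm : (-1 - alpha) * (-1 - beta) * (-1 - gamma) = -2 by rewrite -hm; ring.
have P0 : (0 - alpha) * (0 - beta) * (0 - gamma) = -1 by rewrite -h0; ring.
have two0 : (2 : algC) != 0 by rewrite pnatr_eq0.
have e1 : alpha + beta + gamma = 1.
  have : (alpha + beta + gamma) * 2 = 1 * 2.
    have E : (alpha + beta + gamma) * 2 = - ((1 - alpha) * (1 - beta) * (1 - gamma) + (-1 - alpha) * (-1 - beta) * (-1 - gamma)) + 2 * ((0 - alpha) * (0 - beta) * (0 - gamma)) by ring.
    rewrite E P1 Pm P0; ring.
  by move/(mulIf two0).
have e2 : alpha*beta+alpha*gamma+beta*gamma = -1.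
  have : (alpha*beta+alpha*gamma+beta*gamma) * 2 = -1 * 2.
    have E : (alpha*beta+alpha*gamma+beta*gamma) * 2 = (1 - alpha) * (1 - beta) * (1 - gamma) - (-1 - alpha) * (-1 - beta) * (-1 - gamma) - 2 by ring.
    rewrite E P1 Pm; ring.
  by move/(mulIf two0).
elim/ltn_ind: n => -[|[|[|m]]] IH.
- rewrite /= !expr0; ring.
- rewrite /= !expr1 e1; ring.
- have E : alpha ^+ 2 + beta ^+ 2 + gamma ^+ 2 = (alpha + beta + gamma) ^+ 2 - 2 * (alpha*beta+alpha*gamma+beta*gamma) by ring.
  rewrite E e1 e2 /=. ring.
- have -> : S m.+3 = S m.+2 + S m.+1 + S m by [].
  rewrite !intrD IH // IH // (IH m (ltnW (ltnW (ltnSn m.+1)))).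
  have K : forall t, t = alpha \/ t = beta \/ t = gamma -> t ^+ m.+3 = t ^+ m.+2 + t ^+ m.+1 + t ^+ m.
    move=> t ht.
    rewrite -(addn3 m) -(addn2 m) -(addn1 m) !exprD (ra t ht); ring.
  rewrite (K alpha (or_introl erefl)) (K beta (or_intror (or_introl erefl))) (K gamma (or_intror (or_intror erefl))); ring.
Qed.

Theorem mainTheorem9 (alpha beta gamma : algC)
  (hroots : ('X^3 - 'X^2 - 'X - 1 : {poly algC})
            = ('X - alpha%:P) * ('X - beta%:P) * ('X - gamma%:P))
  (n : nat) :
  ((S n)%:~R ^+ 4 = (S (4 * n))%:~R + 2 * C alpha beta gamma (2 * n)
                    + 4 * C alpha beta gamma n ^+ 2
                    + 4 * (S (2 * n))%:~R * C alpha beta gamma n)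
  /\
  ((S (4 * n))%:~R + 2 * C alpha beta gamma (2 * n)
     + 4 * C alpha beta gamma n ^+ 2
     + 4 * (S (2 * n))%:~R * C alpha beta gamma n
   = (S (4 * n))%:~R - 4 * (S n)%:~R
     + 4 * (S (2 * n))%:~R * C alpha beta gamma n
     + 6 * C alpha beta gamma n ^+ 2 :> algC).
Proof.
have h0 := evalH hroots 0.
have e3 : alpha * beta * gamma = 1.
  have E2 : alpha * beta * gamma = - ((0 - alpha) * (0 - beta) * (0 - gamma)) by ring.
  rewrite E2 -h0; ring.
have x3 : alpha ^+ n * beta ^+ n * gamma ^+ n = 1 by rewrite -!exprMn e3 expr1n.
rewrite /C !(S_eq hroots) !(mulnC _ n) !exprM.
set x := alpha ^+ n; set y := beta ^+ n; set z := gamma ^+ n.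
rewrite -/x -/y -/z in x3.
split; first ring.
have E : 2 * ((x ^+ 2) * (y ^+ 2) + (x ^+ 2) * (z ^+ 2) + (y ^+ 2) * (z ^+ 2)) =
   2 * (x*y+x*z+y*z) ^+ 2 - 4 * (x + y + z) * (x * y * z) by ring.
rewrite x3 mulr1 in E.
have -> : forall A B D F : algC, A + 2 * B + D + F = A + (2 * B) + D + F by [].
rewrite E; ring.
Qed.
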